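(* Let $G$ be a signed graph. A subset $F\subseteq\mathbb{R}^n$ is a facet of $\mathrm{cone}(\mathcal{P}_G)$ if and only if there exists a facet subgraph $H$ of $G$ such that $\mathrm{cone}(\mathcal{P}_H)=F$.
   Context: A signed graph $G$ on vertex set $\{1,\dots,n\}$ is a finite undirected graph, possibly with loops but without multiple edges, together with a sign function $\mathrm{sgn}:E(G)\to\{+1,-1\}$; an edge $ij$ of sign $\pm1$ is written $\pm ij$. For an edge $e=\pm ij$ put $\rho(e)=\mathrm{sgn}(e)(e_i+e_j)\in\mathbb{R}^n$ (a loop $ii$ gives $2\,\mathrm{sgn}(ii)e_i$). $\mathcal{P}_G=\mathrm{conv}(\rho(E(G)))$, and $\mathrm{cone}(\mathcal{P}_G)$ is the set of nonnegative real linear combinations of its points; a facet is a proper face of maximal dimension. Subgraphs are spanning: a subgraph $H$ of $G$ has vertex set $\{1,\dots,n\}$ and a subset of the edges of $G$ with the same signs; $G\setminus H$ denotes the set of edges of $G$ not in $H$. A component is a maximal connected subgraph (an isolated vertex is a component). A component is bipartite if its vertex set can be partitioned into sets $L,R$ (one possibly empty) with every edge of the component having exactly one endpoint in each (a component with a loop is not bipartite). $\mathrm{bicomp}(\cdot)$ is the number of bipartite components. A subgraph $H$ of $G$ is a facet subgraph if (1) $\mathrm{bicomp}(H)=\mathrm{bicomp}(G)+1$, and (2) for any bipartite component $H'$ of $H$ which is not a component of $G$, there is a bipartition $V(H')=L\cup R$ such that every edge $e\in G\setminus H$ is either a positive edge with at least one endpoint in $L$ and no endpoint in $R$, or a negative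 edge with at least one endpoint in $R$ and no endpoint in $L$. *)

(* Defs.v *)
From HB Require Import structures.
From mathcomp Require Import all_boot all_order all_algebra.
Set Implicit Arguments. Unset Strict Implicit. Unset Printing Implicit Defensive.
Import Order.TTheory GRing.Theory Num.Theory.
Local Open Scope ring_scope.

(* A signed edge on vertex set 'I_n (vertices 0..n-1 represent 1..n):
   (s, i, j) with sign s (true = +1, false = -1) and endpoints i <= j
   (i = j is a loop). *)
Definition sedge (n : nat) := (bool * 'I_n * 'I_n)%type.
Definition esgn n (e : sedge n) : bool := e.1.1.
Definition eu n (e : sedge n) : 'I_n := e.1.2.
Definition ev n (e : sedge n) : 'I_n := e.2.

Definition signed_graph n (G : {set sedge n}) : Prop :=
  (forall e, e \in G -> (eu e <= ev e)%N) /\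
  (forall e f, e \in G -> f \in G -> eu e = eu f -> ev e = ev f -> e = f).

Section Geom.
Variables (R : realFieldType) (n : nat).

Definition unitv (i : 'I_n) : 'rV[R]_n := \row_k ((k == i)%:R).
Definition sgnR (s : bool) : R := if s then 1 else -1.
Definition rho (e : sedge n) : 'rV[R]_n := sgnR (esgn e) *: (unitv (eu e) + unitv (ev e)).

Definition dotv (a x : 'rV[R]_n) : R := \sum_(k < n) a 0 k * x 0 k.

Definition conv (S : 'rV[R]_n -> Prop) (x : 'rV[R]_n) : Prop :=
  exists m (v : 'I_m -> 'rV[R]_n) (c : 'I_m -> R),
    (forall k, S (v k)) /\ (forall k, 0 <= c k) /\ \sum_k c k = 1 /\
    x = \sum_k c k *: v k.
Definition cone (S : 'rV[R]_n -> Prop) (x : 'rV[R]_n) : Prop :=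
  exists m (v : 'I_m -> 'rV[R]_n) (c : 'I_m -> R),
    (forall k, S (v k)) /\ (forall k, 0 <= c k) /\ x = \sum_k c k *: v k.

Definition P_G (G : {set sedge n}) : 'rV[R]_n -> Prop :=
  conv (fun y => exists2 e, e \in G & y = rho e).
Definition coneP (G : {set sedge n}) : 'rV[R]_n -> Prop := cone (P_G G).

Definition same_set (A B : 'rV[R]_n -> Prop) : Prop := forall x, A x <-> B x.

Definition face (C F : 'rV[R]_n -> Prop) : Prop :=
  exists (a : 'rV[R]_n) (b : R),
    (forall x, C x -> dotv a x <= b) /\
    (forall x, F x <-> (C x /\ dotv a x = b)).
Definition proper_face (C F : 'rV[R]_n -> Prop) : Prop :=
  face C F /\ (exists x, F x) /\ ~ same_set F C.

(* F contains k linearly independent vectors (so dim span F >= k) *)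
Definition indep_in (F : 'rV[R]_n -> Prop) (k : nat) : Prop :=
  exists s : seq 'rV[R]_n, size s = k /\ (forall v, v \in s -> F v) /\ free s.

Definition facet (C F : 'rV[R]_n -> Prop) : Prop :=
  proper_face C F /\
  forall F', proper_face C F' -> forall k, indep_in F' k -> indep_in F k.
End Geom.

Section Comb.
Variable n : nat.
Implicit Types (G H : {set sedge n}) (V L : {set 'I_n}).

Definition adj G : rel 'I_n :=
  fun i j => [exists e in G, ((eu e == i) && (ev e == j)) || ((eu e == j) && (ev e == i))].
Definition comp G (i : 'I_n) : {set 'I_n} := [set j | connect (adj G) i j].
Definition components G : {set {set 'I_n}} := [set comp G i | i : 'I_n].

Definition is_bipartition G V L : bool :=
  (L \subset V) &&
  [forall e in G, (eu e \in V) ==> ((eu e \in L) != (ev e \in L))].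
Definition bipartite G V : bool := [exists L, is_bipartition G V L].
Definition bicomp G : nat := #|[set V in components G | bipartite G V]|.

Definition comp_of_G G H V : bool :=
  (V \in components G) && [forall e in G, (eu e \in V) ==> (e \in H)].

Definition facet_subgraph G H : Prop :=
  H \subset G /\
  bicomp H = (bicomp G).+1 /\
  (forall V, V \in components H -> bipartite H V -> ~~ comp_of_G G H V ->
     exists L, is_bipartition H V L /\
       forall e, e \in G -> e \notin H ->
         (esgn e /\ (eu e \in L \/ ev e \in L) /\
            eu e \in L :|: ~: V /\ ev e \in L :|: ~: V) \/
         (~~ esgn e /\ (eu e \in V :\: L \/ ev e \in V :\: L) /\
            eu e \in ~: L /\ ev e \in ~: L)).
End Comb.

(* Main.v *)
Require Import Defs.
From HB Require Import structures.
From mathcomp Require Import all_boot all_order all_algebra.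
From mathcomp Require Import lra zify.
Set Implicit Arguments. Unset Strict Implicit. Unset Printing Implicit Defensive.
Import Order.TTheory GRing.Theory Num.Theory.
Local Open Scope ring_scope.
Local Notation comp := Defs.comp.

Section Basics.
Variables (R : realFieldType) (n : nat).
Local Notation rV := 'rV[R]_n.
Local Notation rho := (@rho R n).
Local Notation dotv := (@dotv R n).

Lemma dotvDr a x y : dotv a (x + y) = dotv a x + dotv a y.
Proof. by rewrite /dotv -big_split /=; apply: eq_bigr => k _; rewrite mxE mulrDr. Qed.
Lemma dotvZr a c x : dotv a (c *: x) = c * dotv a x.
Proof. by rewrite /dotv mulr_sumr; apply: eq_bigr => k _; rewrite mxE mulrCA. Qed.
Lemma dotv0r a : dotv a 0 = 0.
Proof. by rewrite /dotv big1 // => k _; rewrite mxE mulr0. Qed.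
Lemma dotvC a x : dotv a x = dotv x a.
Proof. by apply: eq_bigr => k _; rewrite mulrC. Qed.
Lemma dotvDl a b x : dotv (a + b) x = dotv a x + dotv b x.
Proof. by rewrite dotvC dotvDr -!(dotvC x). Qed.
Lemma dotvZl c a x : dotv (c *: a) x = c * dotv a x.
Proof. by rewrite dotvC dotvZr dotvC. Qed.
Lemma dotvNl a x : dotv (- a) x = - dotv a x.
Proof. by rewrite -scaleN1r dotvZl mulN1r. Qed.
Lemma dotv_sumr I (r : seq I) (P : pred I) a (F : I -> rV) :
  dotv a (\sum_(i <- r | P i) F i) = \sum_(i <- r | P i) dotv a (F i).
Proof.
rewrite /Defs.dotv exchange_big /=; apply: eq_bigr => k _.
by rewrite summxE mulr_sumr.
Qed.
Lemma dotv_ge0 x : 0 <= dotv x x.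
Proof. by apply: sumr_ge0 => k _; rewrite -expr2 sqr_ge0. Qed.
Lemma dotv_eq0 x : dotv x x = 0 -> x = 0.
Proof.
move=> h; apply/rowP => k; rewrite mxE.
have: x 0 k * x 0 k = 0.
  apply: (psumr_eq0P (P := predT) (F := fun k => x 0 k * x 0 k)) => //.
  by move=> i _; rewrite -expr2 sqr_ge0.
by move/eqP; rewrite mulf_eq0 orbb => /eqP.
Qed.

Lemma unitvE (i k : 'I_n) : (unitv R i) 0 k = (k == i)%:R.
Proof. by rewrite mxE. Qed.

Lemma dotv_unit a (i : 'I_n) : dotv a (unitv R i) = a 0 i.
Proof.
rewrite /dotv (bigD1 i) //= big1 => [|k /negbTE kn]; last by rewrite mxE kn mulr0.
by rewrite mxE eqxx mulr1 addr0.
Qed.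

Lemma dot_rho a e : dotv a (rho e) = sgnR R (esgn e) * (a 0 (eu e) + a 0 (ev e)).
Proof. by rewrite /Defs.rho dotvZr dotvDr !dotv_unit. Qed.

End Basics.

Section Cone.
Variables (R : realFieldType) (n : nat).
Local Notation rV := 'rV[R]_n.
Local Notation rho := (@rho R n).
Local Notation dotv := (@dotv R n).
Local Notation coneP := (@coneP R n).
Implicit Types (G H : {set sedge n}).

Definition comb G (c : sedge n -> R) : rV := \sum_(e in G) c e *: rho e.
Definition Kc G (x : rV) := exists c : sedge n -> R, (forall e, 0 <= c e) /\ x = comb G c.

Lemma Kc0 G : Kc G 0.
Proof.
exists (fun _ => 0); split; first by move=> e.
by rewrite /comb big1 // => e _; rewrite scale0r.
Qed.
Lemma KcD G x y : Kc G x -> Kc G y -> Kc G (x + y).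
Proof.
move=> [c [c0 ->]] [d [d0 ->]]; exists (fun e => c e + d e); split.
  by move=> e; rewrite addr_ge0.
by rewrite /comb -big_split; apply: eq_bigr => e _; rewrite scalerDl.
Qed.
Lemma KcZ G t x : 0 <= t -> Kc G x -> Kc G (t *: x).
Proof.
move=> t0 [c [c0 ->]]; exists (fun e => t * c e); split.
  by move=> e; rewrite mulr_ge0.
by rewrite /comb scaler_sumr; apply: eq_bigr => e _; rewrite scalerA.
Qed.
Lemma Kc_rho G e : e \in G -> Kc G (rho e).
Proof.
move=> eG; exists (fun f => (f == e)%:R); split.
  by move=> f; rewrite ler0n.
rewrite /comb (bigD1 e) //= eqxx scale1r big1 ?addr0 // => f /andP [_ /negbTE ->].
by rewrite scale0r.
Qed.
Lemma Kc_sum G m (c : 'I_m -> R) (v : 'I_m -> rV) :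
  (forall k, 0 <= c k) -> (forall k, Kc G (v k)) -> Kc G (\sum_k c k *: v k).
Proof.
move=> c0 hv; apply: (big_ind (Kc G)); [exact: Kc0 | exact: KcD |].
by move=> k _; apply: KcZ.
Qed.

Lemma coneP_E G x : coneP G x <-> Kc G x.
Proof.
split.
  move=> [m [v [c [hv [c0 ->]]]]]; apply: Kc_sum => // k.
  have [m' [w [d [hw [d0 [_ ->]]]]]] := hv k.
  apply: Kc_sum => // j; have [e eG ->] := hw j; exact: Kc_rho.
move=> [c [c0 ->]]; exists #|G|, (fun k => rho (enum_val k)), (fun k => c (enum_val k)).
split; last split; [|by move=> k; apply: c0|by rewrite /comb big_enum_val].
move=> k; exists 1%N, (fun _ => rho (enum_val k)), (fun _ => 1); split.
  by move=> _; exists (enum_val k) => //; apply: enum_valP.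
split; first by move=> _; rewrite ler01.
by split; rewrite !big_ord1 ?scale1r.
Qed.

Lemma dotv_comb a G c : dotv a (comb G c) = \sum_(e in G) c e * dotv a (rho e).
Proof. by rewrite /comb dotv_sumr; apply: eq_bigr => e _; rewrite dotvZr. Qed.

Lemma coneP0 G : coneP G 0.
Proof. by apply/coneP_E/Kc0. Qed.

Lemma coneP_rho G e : e \in G -> coneP G (rho e).
Proof. by move=> eG; apply/coneP_E/Kc_rho. Qed.

Lemma coneP_sub G H x : H \subset G -> coneP H x -> coneP G x.
Proof.
move=> sHG /coneP_E [c [c0 ->]]; apply/coneP_E.
exists (fun e => if e \in H then c e else 0); split.
  by move=> e; case: ifP.
rewrite /comb [RHS](bigID (mem H)) /= [X in _ = _ + X]big1 ?addr0.
  rewrite [RHS](eq_bigl (mem H)); last by move=> e; rewrite andb_idl // => /(subsetP sHG).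
  by apply: eq_bigr => e ->.
by move=> e /andP [_ /negbTE ->]; rewrite scale0r.
Qed.

Definition valid G a := forall e, e \in G -> dotv a (rho e) <= 0.

Lemma valid_cone G a x : valid G a -> coneP G x -> dotv a x <= 0.
Proof.
move=> va /coneP_E [c [c0 ->]]; rewrite dotv_comb.
by apply: sumr_le0 => e eG; rewrite mulr_ge0_le0 // va.
Qed.

Lemma face_valid G H a : H \subset G -> valid G a ->
  (forall e, e \in G -> (dotv a (rho e) == 0) = (e \in H)) ->
  forall x, (coneP G x /\ dotv a x = 0) <-> coneP H x.
Proof.
move=> sHG va hH x; split.
  move=> [/coneP_E [c [c0 xE]] ax]; apply/coneP_E.
  exists c; split => //; rewrite xE /comb [LHS](bigID (mem H)) /=.
  rewrite [X in _ + X = _]big1 ?addr0.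
    apply: eq_bigl => e; apply/andP/idP => [[]//|eH]; split => //; exact: (subsetP sHG).
  have: \sum_(e in G) c e * dotv a (rho e) = 0 by rewrite -dotv_comb -xE.
  move=> hs.
  have hz : forall e, e \in G -> c e * dotv a (rho e) = 0.
    move=> e eG; apply/eqP; rewrite -oppr_eq0; apply/eqP.
    apply: (psumr_eq0P (P := mem G) (F := fun e => - (c e * dotv a (rho e)))) => //.
      by move=> f fG; rewrite oppr_ge0 mulr_ge0_le0 // va.
    by rewrite sumrN hs oppr0.
  move=> e /andP [eG eH]; have := hz e eG; move/eqP; rewrite mulf_eq0.
  by rewrite hH // (negbTE eH) orbF => /eqP ->; rewrite scale0r.
move=> hx; split; first exact: coneP_sub hx.
move: hx => /coneP_E [c [c0 ->]]; rewrite dotv_comb big1 // => e eH.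
have eG : e \in G by apply: (subsetP sHG).
by move: (hH e eG); rewrite eH => /eqP ->; rewrite mulr0.
Qed.

End Cone.

Section Spaces.
Variables (R : realFieldType) (n : nat).
Local Notation rV := 'rV[R]_n.
Local Notation rho := (@rho R n).
Local Notation dotv := (@dotv R n).
Local Notation coneP := (@coneP R n).
Implicit Types (G H : {set sedge n}).

Definition gens H : seq rV := [seq rho e | e <- enum H].
Definition UH H : {vspace rV} := <<gens H>>%VS.
Definition Mh H : 'M[R]_n := \sum_(e in H) (rho e)^T *m rho e.
Definition hH H : 'End(rV) := linfun (mulmxr (Mh H)).
Definition WH H : {vspace rV} := lker (hH H).

Lemma rho_UH H e : e \in H -> rho e \in UH H.
Proof. by move=> eH; apply: memv_span; apply: map_f; rewrite mem_enum. Qed.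

Lemma cone_UH H x : coneP H x -> x \in UH H.
Proof.
move=> /coneP_E [c [_ ->]]; rewrite /comb; apply: rpred_sum => e eH.
by apply: rpredZ; apply: rho_UH.
Qed.

Lemma mul_tr_dot (a u v : rV) : a *m u^T *m v = dotv a u *: v.
Proof.
rewrite [a *m u^T]mx11_scalar mul_scalar_mx; congr (_ *: _).
by rewrite !mxE; apply: eq_bigr => k _; rewrite mxE.
Qed.

Lemma hH_E H a : hH H a = \sum_(e in H) dotv a (rho e) *: rho e.
Proof.
rewrite lfunE /= /Mh mulmx_sumr; apply: eq_bigr => e _.
by rewrite mulmxA mul_tr_dot.
Qed.

Lemma memWH H a : (a \in WH H) <-> (forall e, e \in H -> dotv a (rho e) = 0).
Proof.
rewrite memv_ker; split => [/eqP h|h].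
  have hs : \sum_(e in H) (dotv a (rho e)) ^+ 2 = 0.
    by rewrite -[RHS](dotv0r a) -h hH_E dotv_sumr; apply: eq_bigr => e _; rewrite dotvZr expr2.
  move=> e eH; apply/eqP; rewrite -sqrf_eq0; apply/eqP.
  by apply: (psumr_eq0P (P := mem H) (F := fun e => dotv a (rho e) ^+ 2)) => // f _; rewrite sqr_ge0.
rewrite hH_E big1 // => e eH; by rewrite h // scale0r.
Qed.

Lemma span_orth H a x : (forall e, e \in H -> dotv a (rho e) = 0) -> x \in UH H -> dotv a x = 0.
Proof.
move=> ha /coord_span ->; rewrite dotv_sumr big1 // => i _.
rewrite dotvZr; set y := _`_i.
have: y \in gens H by apply: mem_nth; rewrite size_tuple.
by case/mapP => e; rewrite mem_enum => eH ->; rewrite ha ?mulr0.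
Qed.

Lemma dimUW H : (\dim (UH H) + \dim (WH H) = n)%N.
Proof.
apply/eqP; rewrite eqn_leq; apply/andP; split.
  rewrite -dimv_sum_cap.
  have -> : (UH H :&: WH H = 0)%VS.
    apply/eqP; rewrite -subv0; apply/subvP => x; rewrite memv_cap => /andP [xU /memWH xW].
    rewrite memv0; apply/eqP; apply: dotv_eq0; exact: span_orth xW xU.
  rewrite dimv0 addn0.
  have hd : \dim (fullv : {vspace rV}) = n by rewrite dimvf /dim /= mul1n.
  by rewrite -[X in (_ <= X)%N]hd; apply: dimvS; apply: subvf.
have hd : \dim (fullv : {vspace rV}) = n by rewrite dimvf /dim /= mul1n.
have E := limg_ker_dim (hH H) fullv; rewrite capfv in E.
rewrite -[X in (X <= _)%N]hd -E addnC leq_add2r; apply: dimvS; apply/subvP => y /memv_imgP [u _ ->].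
rewrite hH_E; apply: rpred_sum => e eH; apply: rpredZ; exact: rho_UH.
Qed.

End Spaces.

Section Graph.
Variable n : nat.
Implicit Types (G H : {set sedge n}) (V L : {set 'I_n}) (i j k x y r : 'I_n).

Lemma adj_sym H : symmetric (adj H).
Proof.
move=> i j; apply/existsP/existsP => [] [e /andP [eH he]]; exists e;
  by rewrite eH /= orbC.
Qed.

Lemma conn_sym H i j : connect (adj H) i j = connect (adj H) j i.
Proof. exact: (sym_connect_sym (adj_sym H)). Qed.

Lemma comp_self H i : i \in comp H i.
Proof. by rewrite inE connect0. Qed.

Lemma comp_eq H i j : j \in comp H i -> comp H j = comp H i.
Proof.
rewrite inE => hij; apply/setP => k; rewrite !inE; apply/idP/idP => h.
  exact: connect_trans hij h.
by rewrite conn_sym in hij; exact: connect_trans hij h.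
Qed.

Lemma comps_in H V k : V \in components H -> k \in V -> V = comp H k.
Proof. by case/imsetP => i _ -> /comp_eq ->. Qed.

Lemma comp_in_comps H i : comp H i \in components H.
Proof. by apply: imset_f. Qed.

Lemma adj_edge H e : e \in H -> adj H (eu e) (ev e).
Proof. by move=> eH; apply/existsP; exists e; rewrite eH !eqxx. Qed.

Lemma comp_closed H e i : e \in H -> (eu e \in comp H i) = (ev e \in comp H i).
Proof.
move=> eH; rewrite !inE; have a := connect1 (adj_edge eH).
apply/idP/idP => h; first exact: connect_trans h a.
by rewrite conn_sym in a; exact: connect_trans h a.
Qed.

Lemma comps_closed H V e : V \in components H -> e \in H -> (eu e \in V) = (ev e \in V).
Proof. by case/imsetP => i _ ->; apply: comp_closed. Qed.

Lemma adjP H x y : adj H x y ->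
  exists2 e, e \in H & (eu e = x /\ ev e = y) \/ (eu e = y /\ ev e = x).
Proof.
case/existsP => e /andP [eH /orP [] /andP [/eqP h1 /eqP h2]]; exists e => //; by [left|right].
Qed.

Lemma conn_ind H i (P : 'I_n -> Prop) : P i ->
  (forall y x, y \in comp H i -> x \in comp H i -> adj H y x -> P y -> P x) ->
  forall j, j \in comp H i -> P j.
Proof.
move=> Pi step j; rewrite inE => /connectP [p pth ->].
elim/last_ind: p pth => [|p x IH] //=.
rewrite rcons_path last_rcons => /andP [pth ax].
have yc : last i p \in comp H i by rewrite inE; apply/connectP; exists p.
apply: (step (last i p)) => //; last exact: IH.
by rewrite inE; apply: connect_trans (connect1 ax); rewrite -inE.
Qed.

Lemma bip_compl H V L : V \in components H -> is_bipartition H V L ->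
  is_bipartition H V (V :\: L).
Proof.
move=> Vc /andP [_ /forallP hL]; apply/andP; split; first exact: subsetDl.
apply/forallP => e; apply/implyP => eH; apply/implyP => euV.
have evV : ev e \in V by rewrite -(comps_closed Vc eH).
move: (hL e); rewrite eH euV /= => h.
by rewrite !inE euV evV /= !andbT; apply: contra_neq h => /negb_inj.
Qed.

Definition Lb H V := odflt set0 [pick L | is_bipartition H V L].
Definition rt V := [pick i in V].
Definition LV H V := if rt V is Some r then (if r \in Lb H V then Lb H V else V :\: Lb H V)
  else Lb H V.

Lemma Lb_bip H V : bipartite H V -> is_bipartition H V (Lb H V).
Proof.
rewrite /Lb; case: pickP => [L //|h /existsP [L hL]].
by move: (h L); rewrite hL.
Qed.

Lemma LV_bip H V : V \in components H -> bipartite H V -> is_bipartition H V (LV H V).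
Proof.
move=> Vc bV; have hb := Lb_bip bV; rewrite /LV; case: (rt V) => // r.
by case: ifP => // _; apply: bip_compl.
Qed.

Lemma rtP V : V != set0 -> exists r, rt V = Some r /\ r \in V.
Proof.
move=> /set0Pn [x xV]; rewrite /rt; case: pickP => [r rV|h]; first by exists r.
by move: (h x); rewrite xV.
Qed.

Lemma comps_n0 H V : V \in components H -> V != set0.
Proof. by case/imsetP => i _ ->; apply/set0Pn; exists i; apply: comp_self. Qed.

Lemma LV_root H V : V \in components H -> exists r, [/\ rt V = Some r, r \in V & r \in LV H V].
Proof.
move=> Vc; have [r [hr rV]] := rtP (comps_n0 Vc); exists r; split => //.
by rewrite /LV hr; case: ifP => // /negbT h; rewrite inE h rV.
Qed.

End Graph.

Section Wdim.
Variables (R : realFieldType) (n : nat).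
Local Notation rV := 'rV[R]_n.
Local Notation rho := (@rho R n).
Local Notation dotv := (@dotv R n).
Implicit Types (G H : {set sedge n}) (V L : {set 'I_n}) (i j k x y r : 'I_n).

Definition bv V L : rV := \row_k (if k \in V then (if k \in L then 1 else -1) else 0).

Lemma sgnR_neq0 s : sgnR R s != 0.
Proof. by case: s; rewrite /sgnR ?oppr_eq0 oner_eq0. Qed.

Lemma dot_rho0 a e : dotv a (rho e) = 0 -> a 0 (ev e) = - a 0 (eu e).
Proof.
rewrite dot_rho => /eqP; rewrite mulf_eq0 (negbTE (sgnR_neq0 _)) /= addrC addr_eq0.
by move/eqP.
Qed.

Lemma bv_W H V L : V \in components H -> is_bipartition H V L -> bv V L \in WH R H.
Proof.
move=> Vc /andP [_ /forallP hL]; apply/memWH => e eH; rewrite dot_rho !mxE.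
rewrite -(comps_closed Vc eH); case: ifP => euV; last by rewrite addr0 mulr0.
move: (hL e); rewrite eH euV /=.
by case: (eu e \in L); case: (ev e \in L) => //= _; rewrite ?subrr ?addNr mulr0.
Qed.

Lemma path_alt H i L a : a \in WH R H -> is_bipartition H (comp H i) L ->
  forall j, j \in comp H i -> a 0 j = if (j \in L) == (i \in L) then a 0 i else - a 0 i.
Proof.
move=> /memWH aW /andP [_ /forallP hL]; apply: conn_ind; first by rewrite eqxx.
move=> y x yc xc /adjP [e eH he] IH.
have hE := dot_rho0 (aW e eH).
have [hb hx] : ((y \in L) != (x \in L)) /\ a 0 x = - a 0 y.
  case: he => [[h1 h2]|[h1 h2]]; move: (hL e); rewrite eH h1 h2 ?yc ?xc /= => hb;
    rewrite h1 h2 in hE.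
    by split.
  by split; [rewrite eq_sym | rewrite hE opprK].
rewrite hx IH; move: hb.
by case: (y \in L); case: (x \in L); case: (i \in L) => //= _; rewrite opprK.
Qed.

Lemma path_pm H i a : a \in WH R H ->
  forall j, j \in comp H i -> a 0 j = a 0 i \/ a 0 j = - a 0 i.
Proof.
move=> /memWH aW; apply: conn_ind; first by left.
move=> y x yc xc /adjP [e eH he] IH.
have hE := dot_rho0 (aW e eH).
have hx : a 0 x = - a 0 y.
  by case: he => [[h1 h2]|[h1 h2]]; rewrite h1 h2 in hE; rewrite hE ?opprK.
by rewrite hx; case: IH => ->; [right|left; rewrite opprK].
Qed.

Lemma nonbip_zero H i a : a \in WH R H -> ~~ bipartite H (comp H i) -> a 0 i = 0.
Proof.
move=> aW nb; apply/eqP; apply: contraNT nb => ai0.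
apply/existsP; exists [set j in comp H i | a 0 j == a 0 i]; apply/andP; split.
  by apply/subsetP => j; rewrite inE => /andP [].
apply/forallP => e; apply/implyP => eH; apply/implyP => euV.
have evV : ev e \in comp H i by rewrite -comp_closed.
have hE := dot_rho0 ((iffLR (memWH _ _)) aW e eH).
have hp := path_pm aW euV.
move: euV evV; rewrite !inE => euV evV; rewrite euV evV /= hE.
case: hp => ->; rewrite ?opprK eqxx.
  by apply/negP => /eqP h; move: ai0; rewrite (_ : a 0 i = 0) ?eqxx //; lra.
by rewrite /=; apply/negP => /eqP h; move: ai0; rewrite (_ : a 0 i = 0) ?eqxx //; lra.
Qed.

Definition Bip H := [set V in components H | bipartite H V].
Definition BV H := [seq bv V (LV H V) | V <- enum (Bip H)].
Definition coefv (a : rV) V := if rt V is Some r then a 0 r else 0.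

Lemma Bip_comp H V : V \in Bip H -> V \in components H.
Proof. by rewrite inE => /andP []. Qed.

Lemma Bip_out H V k : V \in Bip H -> V != comp H k -> k \notin V.
Proof. by move=> /Bip_comp Vc; apply: contra_neqN => kV; apply: comps_in. Qed.

Lemma W_span H a : a \in WH R H -> a = \sum_(V in Bip H) coefv a V *: bv V (LV H V).
Proof.
move=> aW; apply/rowP => k; rewrite summxE.
case hb: (comp H k \in Bip H).
  rewrite (bigD1 (comp H k)) //= big1 ?addr0; last first.
    by move=> V /andP [VB Vk]; rewrite !mxE (negbTE (Bip_out VB Vk)) mulr0.
  have Vc := comp_in_comps H k.
  have [r [hr rV rL]] := LV_root Vc.
  have Vr := comp_eq rV.
  have hbip : is_bipartition H (comp H r) (LV H (comp H k)).
    by rewrite Vr; apply: LV_bip; move: hb; rewrite inE => /andP [].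
  rewrite !mxE comp_self /coefv hr.
  rewrite (path_alt aW hbip) ?Vr ?comp_self // rL.
  by case: (k \in LV H (comp H k)); rewrite /= ?mulr1 ?mulrN1.
rewrite big1; last first.
  move=> V VB; rewrite !mxE (negbTE (Bip_out VB _)) ?mulr0 //.
  by apply: contraFneq hb => <-.
apply: nonbip_zero aW _.
by apply/negP => hbip; move: hb; rewrite /Bip in_set comp_in_comps hbip.
Qed.

Lemma BV_free H : free (BV H).
Proof.
rewrite -[BV H]/(tval (in_tuple (BV H))); apply/freeP => c hc i.
have si : (i < size (enum (Bip H)))%N by rewrite -(size_map (fun V => bv V (LV H V))); apply: ltn_ord.
set Vi := nth set0 (enum (Bip H)) i.
have ViB : Vi \in Bip H by rewrite -mem_enum mem_nth.
have [r [_ rVi rL]] := LV_root (Bip_comp ViB).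
have := congr1 (fun M : rV => M 0 r) hc; rewrite summxE mxE (bigD1 i) //= big1.
  rewrite addr0 mxE /BV (nth_map set0) // -/Vi !mxE rVi rL mulr1 => ->; done.
move=> j /negbTE ji; rewrite mxE /BV (nth_map set0) //= ?mxE; last first.
  by rewrite -(size_map (fun V => bv V (LV H V))); apply: ltn_ord.
set Vj := nth set0 (enum (Bip H)) j.
have VjB : Vj \in Bip H by rewrite -mem_enum mem_nth // -(size_map (fun V => bv V (LV H V))); apply: ltn_ord.
have : Vj != Vi.
  rewrite /Vj /Vi nth_uniq ?enum_uniq //; first by apply/negbT; rewrite -val_eqE /= in ji; exact: ji.
  by rewrite -(size_map (fun V => bv V (LV H V))); apply: ltn_ord.
rewrite (comps_in (Bip_comp ViB) rVi) => hne.
by rewrite (negbTE (Bip_out VjB hne)) mulr0.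
Qed.

Lemma WH_span H : WH R H = <<BV H>>%VS.
Proof.
apply/eqP; rewrite eqEsubv; apply/andP; split.
  apply/subvP => a aW; rewrite (W_span aW); apply: rpred_sum => V VB; apply: rpredZ.
  by apply: memv_span; apply: map_f; rewrite mem_enum.
apply/span_subvP => b /mapP [V]; rewrite mem_enum => VB ->.
apply: bv_W; first exact: Bip_comp.
by apply: LV_bip; move: VB; rewrite inE => /andP [].
Qed.

Lemma dimWH H : \dim (WH R H) = bicomp H.
Proof.
by rewrite WH_span; have /eqP -> := BV_free H; rewrite size_map -cardE.
Qed.

End Wdim.

Section Faces.
Variables (R : realFieldType) (n : nat).
Local Notation rV := 'rV[R]_n.
Local Notation rho := (@rho R n).
Local Notation dotv := (@dotv R n).
Local Notation coneP := (@coneP R n).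
Implicit Types (G H : {set sedge n}).

Lemma span_orth_seq (s : seq rV) a x : (forall v, v \in s -> dotv a v = 0) ->
  x \in <<s>>%VS -> dotv a x = 0.
Proof.
move=> ha; rewrite -[s]/(tval (in_tuple s)) => /coord_span ->.
rewrite dotv_sumr big1 // => i _; rewrite dotvZr ha ?mulr0 //.
by apply: mem_nth; apply: ltn_ord.
Qed.

Lemma basis_sub (X : seq rV) : exists s : seq rV,
  [/\ {subset s <= X}, free s & <<s>>%VS = <<X>>%VS].
Proof.
elim: X => [|x X [s [sX fs es]]]; first by exists [::]; split => //; exact: nil_free.
case hx: (x \in <<s>>%VS).
  exists s; split => //.
    by move=> v /sX; rewrite inE => ->; rewrite orbT.
  rewrite span_cons -es; apply/eqP; rewrite eq_sym; apply/eqP/addv_idPr.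
  by rewrite -memvE.
exists (x :: s); split.
- by move=> v; rewrite !inE => /orP [->|/sX ->] //; rewrite orbT.
- by rewrite free_cons hx.
- by rewrite !span_cons es.
Qed.

Lemma indep_cone H k : indep_in (coneP H) k <-> (k <= \dim (UH R H))%N.
Proof.
split.
  move=> [s [sz [hs fs]]]; rewrite -sz -(eqP fs); apply: dimvS.
  by apply/span_subvP => v /hs; apply: cone_UH.
move=> hk; have [s [sX fs es]] := basis_sub (gens R H).
have sz : size s = \dim (UH R H) by rewrite /UH -es (eqP fs).
exists (take k s); split.
  by rewrite size_take sz; case: ltnP => // h; apply/eqP; rewrite eqn_leq h hk.
split.
  move=> v /mem_take /sX /mapP [e]; rewrite mem_enum => eH ->; exact: coneP_rho.
by move: fs; rewrite -{1}(cat_take_drop k s); apply: catl_free.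
Qed.

Lemma face_norm G F : face (coneP G) F -> (exists x, F x) ->
  exists a, valid G a /\ forall x, F x <-> (coneP G x /\ dotv a x = 0).
Proof.
move=> [a [b [hv hF]]] [x /hF [Cx ax]].
have b0 : b = 0.
  have h0 := hv 0 (coneP0 R G); rewrite dotv0r in h0.
  have h2 : coneP G (2%:R *: x).
    by apply/coneP_E; apply: KcZ; [rewrite ler0n | apply/coneP_E].
  have := hv _ h2; rewrite dotvZr ax => h; lra.
rewrite b0 in hF hv; exists a; split; first by move=> e eG; apply: hv; apply: coneP_rho.
exact: hF.
Qed.

Lemma UH_sub G H : H \subset G -> (UH R H <= UH R G)%VS.
Proof.
move=> sHG; apply/span_subvP => v /mapP [e]; rewrite mem_enum => eH ->.
by apply: rho_UH; apply: (subsetP sHG).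
Qed.

Lemma proper_lt G F k : proper_face (coneP G) F -> indep_in F k -> (k < \dim (UH R G))%N.
Proof.
move=> [hf [hne hns]] [s [sz [hs fs]]].
have [a [va hF]] := face_norm hf hne.
rewrite ltnNge; apply/negP => hk; apply: hns => x; split; first by case/hF.
move=> Cx; apply/hF; split => //.
have sU : (<<s>> <= UH R G)%VS by apply/span_subvP => v /hs /hF [/cone_UH].
have eU : <<s>>%VS = UH R G.
  by apply/eqP; rewrite eqEdim sU (eqP fs) sz.
apply: (span_orth_seq (s := s)); first by move=> v /hs /hF [].
by rewrite eU; apply: cone_UH.
Qed.

End Faces.

Section Backward.
Variables (R : realFieldType) (n : nat).
Local Notation rV := 'rV[R]_n.
Local Notation rho := (@rho R n).
Local Notation dotv := (@dotv R n).
Local Notation coneP := (@coneP R n).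
Implicit Types (G H : {set sedge n}) (V L : {set 'I_n}) (x y k : 'I_n).

Definition condb V L (e : sedge n) : bool :=
  (esgn e && ((eu e \in L) || (ev e \in L)) && (eu e \in L :|: ~: V) && (ev e \in L :|: ~: V)) ||
  (~~ esgn e && ((eu e \in V :\: L) || (ev e \in V :\: L)) && (eu e \in ~: L) && (ev e \in ~: L)).

Definition condP V L (e : sedge n) : Prop :=
  (esgn e /\ (eu e \in L \/ ev e \in L) /\
     eu e \in L :|: ~: V /\ ev e \in L :|: ~: V) \/
  (~~ esgn e /\ (eu e \in V :\: L \/ ev e \in V :\: L) /\
     eu e \in ~: L /\ ev e \in ~: L).

Lemma condbP V L e : reflect (condP V L e) (condb V L e).
Proof.
apply: (iffP orP).
  case=> /andP [/andP [/andP [h1 /orP h2] h3] h4]; [left|right]; do !split => //.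
case=> [[h1 [h2 [h3 h4]]]|[h1 [h2 [h3 h4]]]]; [left|right]; rewrite h1 h3 h4 !andbT /=;
  by case: h2 => ->; rewrite ?orbT.
Qed.

Variables (G H : {set sedge n}).

Definition special V := [&& V \in components H, bipartite H V & ~~ comp_of_G G H V].
Definition CondB V L := is_bipartition H V L && [forall e, ((e \in G) && (e \notin H)) ==> condb V L e].
Definition Ls V := odflt set0 [pick L | CondB V L].
Definition aB : rV := \row_k (if special (comp H k) then (if k \in Ls (comp H k) then -1 else 1) else 0).

Hypothesis hfs : facet_subgraph G H.

Lemma Ls_cond V : special V -> CondB V (Ls V).
Proof.
move=> sV; rewrite /Ls; case: pickP => [L //|h].
case/and3P: sV => Vc bV ncV; have [_ [_ h2]] := hfs.
have [L [hb hc]] := h2 V Vc bV ncV.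
move: (h L); rewrite /CondB hb /=; move/negP; case; apply/forallP => e.
by apply/implyP => /andP [eG eH]; apply/condbP; apply: hc.
Qed.

Lemma exists_special : exists V, special V.
Proof.
have [_ [hb _]] := hfs.
apply/existsP; apply: contraT => /existsPn hn.
have : (#|Bip H| <= #|Bip G|)%N.
  apply: subset_leq_card; apply/subsetP => V; rewrite !inE => /andP [Vc bV].
  move: (hn V); rewrite /special Vc bV /= negbK => /andP [VG /forallP hc].
  rewrite VG /=; case/existsP: bV => L /andP [sL /forallP hL]; apply/existsP; exists L.
  rewrite /is_bipartition sL /=; apply/forallP => e; apply/implyP => eG; apply/implyP => euV.
  have eH : e \in H by move: (hc e); rewrite eG euV.
  by move: (hL e); rewrite eH euV.
by rewrite /Bip -/(bicomp H) -/(bicomp G) hb ltnn.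
Qed.

Lemma aB_H e : e \in H -> dotv aB (rho e) = 0.
Proof.
move=> eH; rewrite dot_rho !mxE.
have hc : comp H (ev e) = comp H (eu e) by apply: comp_eq; rewrite -comp_closed // comp_self.
rewrite hc; case: ifP => sp; last by rewrite addr0 mulr0.
have /andP [/andP [_ /forallP hL] _] := Ls_cond sp.
move: (hL e); rewrite eH comp_self /=.
by case: (eu e \in _); case: (ev e \in _) => //= _; rewrite ?addrN ?addNr mulr0.
Qed.

Lemma aB_end e x : e \in G -> e \notin H -> (x = eu e \/ x = ev e) ->
  aB 0 x = if special (comp H x) then (if esgn e then -1 else 1) else 0.
Proof.
move=> eG eH hx; rewrite mxE; case: ifP => // sp.
have /andP [_ /forallP hc] := Ls_cond sp.
move: (hc e); rewrite eG eH /= => /condbP.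
have xV := comp_self H x.
case=> [[s1 [_ [h3 h4]]]|[s1 [_ [h3 h4]]]]; rewrite ?s1 /=.
  have : x \in Ls (comp H x) :|: ~: comp H x by case: hx => hx; [move: h3|move: h4]; rewrite -hx.
  by rewrite in_setU in_setC xV orbF => ->.
rewrite (negbTE s1).
have : x \in ~: Ls (comp H x) by case: hx => hx; [move: h3|move: h4]; rewrite -hx.
by rewrite in_setC => /negbTE ->.
Qed.

Lemma aB_wit e : e \in G -> e \notin H -> exists x, (x = eu e \/ x = ev e) /\ special (comp H x).
Proof.
move=> eG eH; have [V sV] := exists_special.
have /andP [/andP [sL _] /forallP hc] := Ls_cond sV.
have Vc : V \in components H by case/and3P: sV.
move: (hc e); rewrite eG eH /= => /condbP.
have mem : forall x, x \in V -> special (comp H x) by move=> x xV; rewrite -(comps_in Vc xV).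
case=> [[_ [h2 _]]|[_ [h2 _]]].
  by case: h2 => h; [exists (eu e)|exists (ev e)]; split; auto; apply: mem; apply: (subsetP sL).
by case: h2 => h; [exists (eu e)|exists (ev e)]; split; auto; apply: mem;
  move: h; rewrite inE => /andP [].
Qed.

Lemma aB_out e : e \in G -> e \notin H -> dotv aB (rho e) < 0.
Proof.
move=> eG eH; rewrite dot_rho.
rewrite (aB_end eG eH (or_introl erefl)) (aB_end eG eH (or_intror erefl)).
have [x [hx sx]] := aB_wit eG eH.
case: hx => hx; rewrite -hx sx /sgnR; case: (esgn e);
  by case: (special (comp H _)) => /=; lra.
Qed.

Lemma aB_valid : valid G aB.
Proof.
move=> e eG; case eH: (e \in H); first by rewrite aB_H.
by apply: ltW; apply: aB_out => //; rewrite eH.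
Qed.

Lemma aB_tight e : e \in G -> (dotv aB (rho e) == 0) = (e \in H).
Proof.
move=> eG; case eH: (e \in H); first by rewrite aB_H ?eqxx.
by apply/negbTE; rewrite lt_eqF // aB_out // eH.
Qed.

Lemma backward F : same_set (coneP H) F -> facet (coneP G) F.
Proof.
move=> hF; have [sHG [hb _]] := hfs.
have hface : forall z : rV, F z <-> (coneP G z /\ dotv aB z = 0).
  move=> z; rewrite -hF; split => h; first by apply/(face_valid sHG aB_valid aB_tight).
  exact/(face_valid sHG aB_valid aB_tight).
have hdim : (\dim (UH R H)).+1 = \dim (UH R G).
  have h1 := dimUW R H; have h2 := dimUW R G; rewrite !dimWH in h1 h2.
  by move: h1 h2; rewrite hb; lia.
split; first split.
- exists aB, 0; split; last exact: hface.
  by move=> z; apply: valid_cone; apply: aB_valid.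
- split; first by exists 0; apply/hF; apply: coneP0.
  have : ~~ (G \subset H).
    apply/negP => sGH; have eGH : G = H by apply/eqP; rewrite eqEsubset sGH sHG.
    by move: hb; rewrite eGH; lia.
  case/subsetPn => e eG eH hs.
  have := aB_out eG eH; have : F (rho e) by apply/hs; apply: coneP_rho.
  by move=> /hface [_ ->]; rewrite ltxx.
- move=> F' hF' k hk; have := proper_lt hF' hk; rewrite -hdim ltnS => hk'.
  have [s [sz [hs fs]]] := (iffRL (indep_cone R H k)) hk'.
  by exists s; split => //; split => // v /hs /hF.
Qed.

End Backward.

Section Forward1.
Variables (R : realFieldType) (n : nat).
Local Notation rV := 'rV[R]_n.
Local Notation rho := (@rho R n).
Local Notation dotv := (@dotv R n).
Local Notation coneP := (@coneP R n).
Implicit Types (G H : {set sedge n}) (U Z : {vspace rV}).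

Lemma dim_lt U Z v : (U <= Z)%VS -> v \in Z -> v \notin U -> (\dim U < \dim Z)%N.
Proof.
move=> sUZ vZ vU; rewrite ltnNge; apply/negP => h.
have /eqP eUZ : U == Z by rewrite eqEdim sUZ h.
by move: vU; rewrite eUZ vZ.
Qed.

Lemma exists_out U Z : (\dim Z < \dim U)%N -> exists w, w \in U /\ w \notin Z.
Proof.
move=> h; case: (boolP (all (fun v => v \in Z) (vbasis U))) => [/allP ha|/allPn [w wb wZ]].
  have : (U <= Z)%VS by rewrite -(span_basis (vbasisP U)); apply/span_subvP => v /ha.
  by move/dimvS; rewrite leqNgt h.
by exists w; split => //; apply: vbasis_mem.
Qed.

Definition tight G (a : rV) := [set e in G | dotv a (rho e) == 0].

Lemma tight_sub G a : tight G a \subset G.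
Proof. by apply/subsetP => e; rewrite inE => /andP []. Qed.

Lemma tight_eq G a e : e \in G -> (dotv a (rho e) == 0) = (e \in tight G a).
Proof. by move=> eG; rewrite inE eG. Qed.

Lemma tight_W G a : a \in WH R (tight G a).
Proof. by apply/memWH => e; rewrite inE => /andP [_ /eqP]. Qed.

Lemma tight_face G a : valid G a ->
  forall x, (coneP G x /\ dotv a x = 0) <-> coneP (tight G a) x.
Proof. by move=> va; apply: face_valid; [apply: tight_sub | | apply: tight_eq]. Qed.

Lemma WG_sub G H : H \subset G -> (WH R G <= WH R H)%VS.
Proof.
by move=> sHG; apply/subvP => w /memWH hw; apply/memWH => e eH; apply: hw; apply: (subsetP sHG).
Qed.

Lemma grow G a : valid G a ->
  (\dim (WH R G + <[a]>) < \dim (WH R (tight G a)))%N ->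
  exists a', proper_face (coneP G) (fun x => coneP G x /\ dotv a' x = 0) /\
    indep_in (fun x => coneP G x /\ dotv a' x = 0) (\dim (UH R (tight G a))).+1.
Proof.
set H := tight G a => va hd.
have [w0 [w0H w0Z]] := exists_out hd.
have : [exists e, (e \in G) && (dotv w0 (rho e) != 0)].
  apply: contraT => /existsPn hn; case/negP: w0Z; rewrite -[w0]addr0.
  apply: memv_add; last exact: mem0v.
  by apply/memWH => e eG; move: (hn e); rewrite eG /= negbK => /eqP.
case/existsP => e0 /andP [e0G e0w].
pose w := if 0 < dotv w0 (rho e0) then w0 else - w0.
have wH : w \in WH R H by rewrite /w; case: ifP => _; rewrite ?rpredN.
have wZ : w \notin (WH R G + <[a]>)%VS by rewrite /w; case: ifP => _; rewrite ?rpredN.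
have we0 : 0 < dotv w (rho e0).
  rewrite /w; case: ifP => // /negbT; rewrite dotvNl oppr_gt0 -leNgt le_eqVlt (negbTE e0w) //.
have wHe : forall e, e \in H -> dotv w (rho e) = 0 by apply/memWH.
pose P := fun e => (e \in G) && (0 < dotv w (rho e)).
have Pe0 : P e0 by rewrite /P e0G we0.
have Pneg : forall e, P e -> dotv a (rho e) < 0.
  move=> e /andP [eG we]; rewrite lt_neqAle va // andbT (tight_eq a eG).
  by apply/negP => eH; move: we; rewrite wHe // ltxx.
pose f := fun e => - dotv a (rho e) / dotv w (rho e).
case: (arg_minP f Pe0) => es Pes hmin.
set t := f es.
have t0 : 0 < t by rewrite /t /f divr_gt0 // ?oppr_gt0 ?Pneg //; case/andP: Pes.
pose a' := a + t *: w.
have da' : forall e, dotv a' (rho e) = dotv a (rho e) + t * dotv w (rho e).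
  by move=> e; rewrite dotvDl dotvZl.
have va' : valid G a'.
  move=> e eG; rewrite da'; case: (ltP 0 (dotv w (rho e))) => hw.
    have : t <= f e by apply: hmin; rewrite /P eG hw.
    by rewrite /f ler_pdivlMr // => h; lra.
  have := va e eG; have : t * dotv w (rho e) <= 0 by rewrite pmulr_rle0.
  by lra.
set H' := tight G a'.
have sHH' : H \subset H'.
  apply/subsetP => e eH; have eG := subsetP (tight_sub G a) e eH.
  by rewrite -(tight_eq a' eG) da' wHe // mulr0 addr0 (tight_eq a eG).
have esH' : es \in H'.
  case/andP: Pes => esG wes; rewrite -(tight_eq a' esG) da' /t /f divfK ?addrN ?eqxx //.
  by rewrite gt_eqF.
have esH : rho es \notin UH R H.
  apply/negP => hin; have := span_orth (iffLR (memWH _ _) (tight_W G a)) hin.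
  by move/eqP; rewrite (lt_eqF (Pneg es Pes)).
exists a'; split; first split.
- exists a', 0; split => //; by move=> x; apply: valid_cone.
- split; first by exists 0; split; [apply: coneP0 | apply: dotv0r].
  move=> hs; case/negP: wZ.
  have a'W : a' \in WH R G.
    apply/memWH => e eG; have := iffRL (hs (rho e)) (coneP_rho R eG); by case.
  have -> : w = t^-1 *: (a' + (-1) *: a).
    by rewrite /a' scaleN1r addrAC addrN add0r scalerA mulVf ?scale1r // gt_eqF.
  by apply: memvZ; apply: memv_add => //; apply: memvZ; apply: memv_line.
- have h' : forall x, (fun x => coneP G x /\ dotv a' x = 0) x <-> coneP H' x by apply: tight_face.
  have : (\dim (UH R H) < \dim (UH R H'))%N.
    by apply: (dim_lt (v := rho es) (UH_sub R sHH')); [apply: rho_UH | ].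
  move=> /(iffRL (indep_cone R H' _)) [s [sz [hs fs]]].
  by exists s; split => //; split => // v /hs /h'.
Qed.

End Forward1.

Section Forward2.
Variables (R : realFieldType) (n : nat).
Local Notation rV := 'rV[R]_n.
Local Notation rho := (@rho R n).
Local Notation dotv := (@dotv R n).
Local Notation coneP := (@coneP R n).
Implicit Types (G H : {set sedge n}) (V L : {set 'I_n}) (U Z : {vspace rV}).

Lemma bv_compl V L : L \subset V -> bv R V (V :\: L) = - bv R V L.
Proof.
move=> sLV; apply/rowP => k; rewrite !mxE !inE.
case kV: (k \in V) => /=; last by rewrite oppr0.
by case: (k \in L); rewrite /= ?opprK.
Qed.

Lemma bv_val V L x : (bv R V L) 0 x = if x \in V then (if x \in L then 1 else -1) else 0.
Proof. by rewrite mxE. Qed.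

Lemma condL V L e : L \subset V -> 0 < dotv (bv R V L) (rho e) -> condP V L e.
Proof.
move=> sLV; rewrite dot_rho !bv_val /condP !in_setU !in_setC !in_setD.
have hu := subsetP sLV (eu e); have hv := subsetP sLV (ev e).
move: hu hv; rewrite /sgnR.
case: (esgn e); case: (eu e \in L); case: (eu e \in V); case: (ev e \in L); case: (ev e \in V) => //= hu hv;
  try (by move: (hu isT)); try (by move: (hv isT)); try lra;
  by move=> _; first [left; do !split; auto | right; do !split; auto].
Qed.

Lemma dim_addv_le U Z : (\dim (U + Z) <= \dim U + \dim Z)%N.
Proof. by rewrite -dimv_sum_cap leq_addr. Qed.

Lemma compG_of G H V L (a : rV) : H \subset G -> V \in components H ->
  is_bipartition H V L -> a \in WH R H ->
  (forall e, e \in G -> dotv a (rho e) = 0 -> e \in H) ->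
  bv R V L \in WH R G -> comp_of_G G H V.
Proof.
move=> sHG Vc hL aW htight /memWH bW.
have step : forall e, e \in G -> ((eu e \in V) = (ev e \in V)) /\
    ((eu e \in V) -> (eu e \in L) != (ev e \in L)).
  move=> e eG; have := dot_rho0 (bW e eG); rewrite !bv_val.
  case: (eu e \in V); case: (ev e \in V); case: (eu e \in L); case: (ev e \in L) => //=;
    lra.
have inH : forall e, e \in G -> eu e \in V -> e \in H.
  move=> e eG euV; apply: htight => //; rewrite dot_rho.
  have [h1 h2] := step e eG.
  have Ve := comps_in Vc euV.
  have hb : is_bipartition H (comp H (eu e)) L by rewrite -Ve.
  have evc : ev e \in comp H (eu e) by rewrite -Ve -h1.
  rewrite (path_alt aW hb evc); move: (h2 euV).
  by case: (eu e \in L); case: (ev e \in L) => //= _; rewrite ?addrN ?addNr mulr0.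
have [i iV] : exists i, i \in V by case/imsetP: Vc => i _ ->; exists i; apply: comp_self.
have Vi := comps_in Vc iV.
apply/andP; split; last first.
  by apply/forallP => e; apply/implyP => eG; apply/implyP; apply: inH.
have -> : V = comp G i.
  apply/setP => j; apply/idP/idP.
    rewrite Vi inE => hj; rewrite inE; apply: (connect_sub _ hj) => y x /adjP [e eH he].
    apply: connect1; apply/existsP; exists e; rewrite (subsetP sHG) //=.
    by case: he => [[-> ->]|[-> ->]]; rewrite !eqxx ?orbT.
  move: j; apply: conn_ind; first by [].
  move=> y x _ _ /adjP [e eG he] yV; have [h1 _] := step e eG.
  by case: he => [[h2 h3]|[h2 h3]]; [rewrite -h3 -h1 h2 | rewrite -h2 h1 h3].
exact: comp_in_comps.
Qed.

End Forward2.

Section Forward3.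
Variables (R : realFieldType) (n : nat).
Local Notation rV := 'rV[R]_n.
Local Notation rho := (@rho R n).
Local Notation dotv := (@dotv R n).
Local Notation coneP := (@coneP R n).
Implicit Types (G H : {set sedge n}) (V L : {set 'I_n}).

Lemma forward G F : facet (coneP G) F ->
  exists H, facet_subgraph G H /\ same_set (coneP H) F.
Proof.
move=> [[hf [hne hns]] hmax].
have [a [va hF]] := face_norm hf hne.
set H := tight G a; exists H.
have hFH : same_set (coneP H) F.
  by move=> z; rewrite hF; split => h; [apply/(tight_face va) | apply/(tight_face va)].
have aW := tight_W G a.
have sHG := tight_sub G a.
have aG : a \notin WH R G.
  apply/negP => aG; apply: hns => z; split; first by case/hF.
  move=> Cz; apply/hF; split => //.
  exact: span_orth (iffLR (memWH _ _) aG) (cone_UH Cz).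
have indF : forall k, indep_in F k <-> (k <= \dim (UH R H))%N.
  move=> k; rewrite -(indep_cone R H k); split => [] [s [sz [hs fs]]];
    by exists s; split => //; split => // v /hs /hFH.
have hlt : (\dim (UH R H) < \dim (UH R G))%N.
  by apply: (proper_lt (conj hf (conj hne hns))); apply/indF.
have uwH := dimUW R H; have uwG := dimUW R G.
have heq : (\dim (UH R H)).+1 = \dim (UH R G).
  apply/eqP; rewrite eqn_leq hlt /= leqNgt; apply/negP => h2.
  have hd : (\dim (WH R G + <[a]>) < \dim (WH R H))%N.
    have := dim_addv_le (WH R G) <[a]>; rewrite dim_vline.
    by case: (a != 0) => /=; lia.
  have [a' [hp hi]] := grow va hd.
  have /indF := hmax _ hp _ hi; by rewrite ltnn.
have hbic : bicomp H = (bicomp G).+1.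
  by rewrite -!(dimWH R); lia.
split => //; split => //; split => //.
move=> V Vc bV ncV.
set L := LV H V.
have hL := LV_bip Vc bV.
have sLV : L \subset V by case/andP: hL.
have bW : bv R V L \in WH R H by apply: bv_W.
have sub1 : (WH R G + <[a]> <= WH R H)%VS.
  by rewrite subv_add WG_sub // -memvE.
have eqW : (WH R G + <[a]>)%VS = WH R H.
  apply/eqP; rewrite eqEdim sub1 /=.
  have := dim_lt (addvSl (WH R G) <[a]>) (memv_add (mem0v _) (memv_line a)) _.
  rewrite add0r => /(_ aG); lia.
move: bW; rewrite -eqW => /memv_addP [u uG [v /vlineP [lam ->] hb]].
have tightP : forall e, e \in G -> dotv a (rho e) = 0 -> e \in H.
  by move=> e eG /eqP; rewrite (tight_eq a eG).
have [l0|lnz] := eqVneq lam 0.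
  case/negP: ncV; apply: (compG_of sHG Vc hL aW tightP).
  by rewrite hb l0 scale0r addr0.
have dbe : forall e, e \in G -> e \notin H ->
    dotv (bv R V L) (rho e) = lam * dotv a (rho e) /\ dotv a (rho e) < 0.
  move=> e eG eH; split.
    by rewrite hb dotvDl dotvZl (iffLR (memWH _ _) uG) // add0r.
  rewrite lt_neqAle va // andbT (tight_eq a eG); exact: eH.
exists (if 0 < lam then V :\: L else L); split.
  by case: ifP => _ //; apply: bip_compl.
move=> e eG eH; have [h1 h2] := dbe e eG eH.
case: ifP => hl.
  apply: (@condL R); first exact: subsetDl.
  rewrite (@bv_compl R _ _ _ sLV) dotvNl h1 oppr_gt0 pmulr_rlt0 //.
apply: (@condL R) => //; rewrite h1 nmulr_rgt0 //.
by rewrite lt_neqAle lnz /= leNgt hl.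
Qed.

End Forward3.

Unset Implicit Arguments.

Theorem mainTheorem3 (R : realFieldType) (n : nat) (G : {set sedge n})
  (hG : signed_graph G) (F : 'rV[R]_n -> Prop) :
  facet (@coneP R n G) F <->
  exists H : {set sedge n}, facet_subgraph G H /\ same_set (@coneP R n H) F.
Proof.
split; first exact: forward.
by move=> [H [hfs hF]]; apply: backward hF.
Qed.
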